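(* For every $i\ge1$, $$P_i=\sum_{a_1+2a_2+\cdots+ia_i=i}(-1)^{a_1+\cdots+a_i+1}\frac{(a_1+\cdots+a_i-1)!}{a_1!\cdots a_i!}\,l_1^{a_1}\cdots l_i^{a_i},$$ the sum being over tuples $(a_1,\dots,a_i)$ of nonnegative integers.
   Context: ${\cal H}_R$ is the commutative polynomial algebra over $\mathbb{Q}$ on isomorphism classes of rooted trees (finite connected simply connected graphs with a root, edges oriented away from the root). A ladder is a rooted tree in which every vertex has at most one outgoing edge; $l_i$ denotes the unique ladder with $i$ vertices. For $n\ge1$ let $\Psi_n(X_1,\dots,X_n)=\sum_{a_1+2a_2+\cdots+na_n=n}\frac{X_1^{a_1}\cdots X_n^{a_n}}{a_1!\cdots a_n!}$. Define $P_1=l_1$ and, for $n\ge2$, $P_n=l_n-\Psi_n(P_1,\dots,P_{n-1},0)$ (computed in ${\cal H}_R$). *)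

(* Defs.v *)
From HB Require Import structures.
From mathcomp Require Import all_boot all_order all_algebra.
Set Implicit Arguments. Unset Strict Implicit. Unset Printing Implicit Defensive.
Import Order.TTheory GRing.Theory Num.Theory.
Local Open Scope ring_scope.

Section Ladders.
Variable A : comAlgType rat.

(* Exponent tuples (a_1,...,a_n), stored as a : 'I_n -> 'I_(n+1), with
   a_(k+1) = a k (each a_k <= n automatically when sum k a_k = n). *)
Definition weight (n : nat) (a : {ffun 'I_n -> 'I_n.+1}) : nat :=
  (\sum_(k < n) k.+1 * a k)%N.

Definition asum (n : nat) (a : {ffun 'I_n -> 'I_n.+1}) : nat :=
  (\sum_(k < n) a k)%N.

Definition afact (n : nat) (a : {ffun 'I_n -> 'I_n.+1}) : nat :=
  (\prod_(k < n) (a k)`!)%N.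

Definition monom (n : nat) (X : nat -> A) (a : {ffun 'I_n -> 'I_n.+1}) : A :=
  \prod_(k < n) X k.+1 ^+ a k.

Definition Psi (n : nat) (X : nat -> A) : A :=
  \sum_(a : {ffun 'I_n -> 'I_n.+1} | weight a == n)
     ((afact a)%:R^-1 : rat) *: monom X a.

Variable l : nat -> A.

(* Pfun m k = P_k for 1 <= k <= m, and 0 otherwise. *)
Fixpoint Pfun (m : nat) : nat -> A :=
  match m with
  | 0 => fun _ => 0
  | m'.+1 =>
      let f := Pfun m' in
      fun k => if k == m'.+1 then
                 (if m' == 0%N then l 1 else l m'.+1 - Psi m'.+1 f)
               else f k
  end.

(* P_n ; for n >= 2, P_n = l_n - Psi_n(P_1,...,P_(n-1),0). *)
Definition P (n : nat) : A := Pfun n n.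

Definition Pformula (i : nat) : A :=
  \sum_(a : {ffun 'I_i -> 'I_i.+1} | weight a == i)
     (((-1) ^+ (asum a).+1 * ((asum a).-1)`!%:R / (afact a)%:R : rat)
        *: monom l a).

End Ladders.

(* Main.v *)
Require Import Defs.
From HB Require Import structures.
From mathcomp Require Import all_boot all_order all_algebra.
From mathcomp Require Import zify.
Set Implicit Arguments. Unset Strict Implicit. Unset Printing Implicit Defensive.
Import GRing.Theory Num.Theory.
Local Open Scope ring_scope.


Section Trunc.
Variable A : comNzRingType.
Implicit Types p q r : {poly A}.

Definition eqm (D : nat) p q := forall m, (m < D)%N -> p`_m = q`_m.
Definition vz (v : nat) p := forall m, (m < v)%N -> p`_m = 0.
Definition hz (d : nat) p := forall m, (d < m)%N -> p`_m = 0.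

Lemma eqm_refl D p : eqm D p p. Proof. by []. Qed.
Lemma eqm_sym D p q : eqm D p q -> eqm D q p.
Proof. by move=> h m hm; rewrite h. Qed.
Lemma eqm_trans D p q r : eqm D p q -> eqm D q r -> eqm D p r.
Proof. by move=> h1 h2 m hm; rewrite h1 ?h2. Qed.
Lemma eqm_le D D' p q : (D' <= D)%N -> eqm D p q -> eqm D' p q.
Proof. by move=> hD h m hm; apply: h; apply: leq_trans hD. Qed.
Lemma eqmE D p q : eqm D p q <-> vz D (p - q).
Proof.
split=> h m hm; first by rewrite coefB h // subrr.
by apply/eqP; rewrite -subr_eq0 -coefB h.
Qed.
Lemma eqmD D p p' q q' : eqm D p p' -> eqm D q q' -> eqm D (p + q) (p' + q').
Proof. by move=> h1 h2 m hm; rewrite !coefD h1 ?h2. Qed.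
Lemma eqmN D p p' : eqm D p p' -> eqm D (- p) (- p').
Proof. by move=> h1 m hm; rewrite !coefN h1. Qed.
Lemma eqmB D p p' q q' : eqm D p p' -> eqm D q q' -> eqm D (p - q) (p' - q').
Proof. by move=> h1 h2; apply: eqmD h1 (eqmN h2). Qed.
Lemma eqmM D p p' q q' : eqm D p p' -> eqm D q q' -> eqm D (p * q) (p' * q').
Proof.
move=> h1 h2 m hm; rewrite !coefM; apply: eq_bigr => j _.
rewrite h1 ?h2 //; first by apply: leq_ltn_trans hm; apply: leq_subr.
by apply: leq_ltn_trans hm; rewrite -ltnS.
Qed.
Lemma eqmX D p p' j : eqm D p p' -> eqm D (p ^+ j) (p' ^+ j).
Proof.
move=> h; elim: j => [|j IH]; first by rewrite !expr0.
by rewrite !exprS; apply: eqmM.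
Qed.
Lemma eqm_sum D (I : finType) (F G : I -> {poly A}) :
  (forall i, eqm D (F i) (G i)) -> eqm D (\sum_i F i) (\sum_i G i).
Proof. by move=> h m hm; rewrite !coef_sum; apply: eq_bigr => i _; rewrite h. Qed.

Lemma vz_le v v' p : (v' <= v)%N -> vz v p -> vz v' p.
Proof. by move=> hv h m hm; apply: h; apply: leq_trans hv. Qed.
Lemma vz0 v : vz v 0. Proof. by move=> m _; rewrite coef0. Qed.
Lemma vzD v p q : vz v p -> vz v q -> vz v (p + q).
Proof. by move=> h1 h2 m hm; rewrite coefD h1 ?h2 ?addr0. Qed.
Lemma vzN v p : vz v p -> vz v (- p).
Proof. by move=> h1 m hm; rewrite coefN h1 ?oppr0. Qed.
Lemma vz_sum v (I : finType) (F : I -> {poly A}) :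
  (forall i, vz v (F i)) -> vz v (\sum_i F i).
Proof. by move=> h m hm; rewrite coef_sum big1 // => i _; rewrite h. Qed.
Lemma vzM a b p q : vz a p -> vz b q -> vz (a + b)%N (p * q).
Proof.
move=> h1 h2 m hm; rewrite coefM big1 // => j _.
case: (ltnP j a) => ha; first by rewrite h1 ?mul0r.
move: (ltn_ord j) => hj; rewrite h2 ?mulr0 //; lia.
Qed.
Lemma vzMl a p q : vz a p -> vz a (q * p).
Proof. by move=> h; rewrite -[a]add0n; apply: vzM => // m. Qed.
Lemma vzMr a p q : vz a p -> vz a (p * q).
Proof. by move=> h; rewrite mulrC; apply: vzMl. Qed.
Lemma vzX v p j : vz v p -> vz (v * j)%N (p ^+ j).
Proof.
move=> h; elim: j => [|j IH]; first by rewrite muln0 => m.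
by rewrite exprS mulnS; apply: vzM.
Qed.
Lemma eqm_vz D p q r : eqm D p q -> vz D r -> eqm D (p + r) q.
Proof. by move=> h1 h2 m hm; rewrite coefD h1 ?h2 ?addr0. Qed.
Lemma eqmMvz a b p q q' : vz a p -> eqm b q q' -> eqm (a + b)%N (p * q) (p * q').
Proof. by move=> h1 /eqmE h2; apply/eqmE; rewrite -mulrBr; apply: vzM. Qed.
Lemma vz_deriv v p : vz v p -> vz v.-1 p^`().
Proof. move=> h m hm; rewrite coef_deriv h ?mul0rn //; lia. Qed.
Lemma vz_eqm v p q : vz v p -> eqm v p q -> vz v q.
Proof. by move=> h1 h2 m hm; rewrite -h2 ?h1. Qed.
Lemma vz_CX c e v : (v <= e)%N -> vz v (c%:P * 'X^e).
Proof.
move=> hv m hm; rewrite coefCM coefXn.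
by case: (m =P e) => [E|_]; [lia | rewrite mulr0].
Qed.

Lemma hzM a b p q : hz a p -> hz b q -> hz (a + b)%N (p * q).
Proof.
move=> h1 h2 m hm; rewrite coefM big1 // => j _.
case: (leqP j a) => ha; last by rewrite h1 ?mul0r.
have hj : (j <= m)%N by rewrite -ltnS.
rewrite h2 ?mulr0 //; lia.
Qed.
Lemma hzX d p j : hz d p -> hz (d * j)%N (p ^+ j).
Proof.
move=> h; elim: j => [|j IH].
  by rewrite muln0 expr0 => m hm; rewrite coefC; case: m hm.
by rewrite exprS mulnS; apply: hzM.
Qed.
Lemma hzD d p q : hz d p -> hz d q -> hz d (p + q).
Proof. by move=> h1 h2 m hm; rewrite coefD h1 ?h2 ?addr0. Qed.
Lemma hz_sum d (I : finType) (F : I -> {poly A}) :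
  (forall i, hz d (F i)) -> hz d (\sum_i F i).
Proof. by move=> h m hm; rewrite coef_sum big1 // => i _; rewrite h. Qed.
Lemma hz_CX c e d : (e <= d)%N -> hz d (c%:P * 'X^e).
Proof.
move=> hv m hm; rewrite coefCM coefXn.
by case: (m =P e) => [E|_]; [lia | rewrite mulr0].
Qed.

End Trunc.


Section Exp.
Variable A : comAlgType rat.
Implicit Types p q r g y z : {poly A}.

Definition rq (c : rat) : {poly A} := (c *: (1 : A))%:P.

Lemma rqM a b : rq (a * b) = rq a * rq b.
Proof. by rewrite /rq -polyCM -scalerAl mul1r scalerA. Qed.
Lemma rq1 : rq 1 = 1. Proof. by rewrite /rq scale1r. Qed.
Lemma rqN a : rq (- a) = - rq a. Proof. by rewrite /rq scaleNr polyCN. Qed.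
Lemma rqX a k : rq (a ^+ k) = rq a ^+ k.
Proof. by elim: k => [|k IH]; rewrite ?expr0 ?rq1 // !exprS rqM IH. Qed.
Lemma rqn k : rq k%:R = k%:R.
Proof. by rewrite /rq scaler_nat polyCMn. Qed.
Lemma coef_rq c p i : (rq c * p)`_i = c *: p`_i.
Proof. by rewrite /rq coefCM -scalerAl mul1r. Qed.

Lemma mulrn_cancel (x : A) k : x *+ k.+1 = 0 -> x = 0.
Proof.
move=> h; have : ((k.+1)%:R^-1 : rat) *: (x *+ k.+1) = 0 by rewrite h scaler0.
rewrite -(scaler_nat k.+1 x) scalerA mulVf; first by rewrite (@scale1r _ A x).
by rewrite pnatr_eq0.
Qed.

Lemma ode_uniq (D : nat) g y z : y`_0 = z`_0 ->
  eqm D.-1 y^`() (g * y) -> eqm D.-1 z^`() (g * z) -> eqm D y z.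
Proof.
move=> h0 hy hz; apply/eqmE.
have hd : eqm D.-1 (y - z)^`() (g * (y - z)).
  by rewrite derivB mulrBr; apply: eqmB.
suff : forall m, (m <= D)%N -> vz m (y - z) by apply.
elim=> [|m IH] hm; first by move=> k.
have {}IH := IH (ltnW hm).
move=> k; rewrite ltnS leq_eqVlt => /orP[/eqP ->|]; last by apply: IH.
case: m IH hm => [|m] IH hm; first by rewrite coefB h0 subrr.
apply: (mulrn_cancel (k:=m)).
rewrite -coef_deriv hd; last by lia.
by apply: (vzMl _ IH).
Qed.


Definition texp (N : nat) p : {poly A} :=
  \sum_(j < N.+1) rq ((j`!)%:R^-1) * p ^+ j.

Lemma fact_inv_step (i : nat) :
  ((i.+1)`!%:R^-1 : rat) * (i.+1)%:R = (i`!)%:R^-1.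
Proof.
rewrite factS natrM invfM mulrAC mulVf ?mul1r //.
by rewrite pnatr_eq0.
Qed.

Lemma rq_mulrn c x n : rq c * (x *+ n) = rq (c * n%:R) * x.
Proof. by rewrite mulrnAr -mulrnAl /rq -polyCMn scalerMnl mulr_natr. Qed.

Lemma texp_deriv N p : (texp N.+1 p)^`() = p^`() * texp N p.
Proof.
rewrite /texp raddf_sum big_ord_recl /= expr0 mulr1 /rq derivC add0r.
rewrite big_distrr /=; apply: eq_bigr => i _.
rewrite deriv_mulC deriv_exp /bump /= add1n add0n.
have -> : forall c, ((c *: (1:A))%:P) = rq c by [].
by rewrite rq_mulrn fact_inv_step mulrCA.
Qed.

Lemma texp_trunc N p v : vz v p ->
  eqm (v * N.+1)%N (texp N.+1 p) (texp N p).
Proof.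
move=> h; rewrite /texp [X in eqm _ X _]big_ord_recr /=.
by apply: eqm_vz => //; apply: vzMl; apply: vzX.
Qed.

Lemma texp_coef0 N p : vz 1 p -> (texp N p)`_0 = 1.
Proof.
move=> h; rewrite /texp coef_sum big_ord_recl /= coef_rq expr0 coefC /=.
rewrite big1 ?addr0; first by rewrite invr1 scale1r.
move=> i _; rewrite coef_rq.
by rewrite (vzX (j:=i.+1) h) ?scaler0.
Qed.

Lemma texp_eqm D N p q : eqm D p q -> eqm D (texp N p) (texp N q).
Proof.
move=> h; apply: eqm_sum => j; apply: eqmM => //; exact: eqmX.
Qed.

Lemma texp0 N : texp N 0 = 1.
Proof.
rewrite /texp big_ord_recl /= expr0 mulr1 big1 ?addr0.
  by rewrite invr1 rq1.
by move=> i _; rewrite expr0n mulr0.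
Qed.

Lemma texp_ode N p v : (0 < v)%N -> vz v p ->
  eqm (N.+1 * v)%N.-1 (texp N p)^`() (p^`() * texp N p).
Proof.
move=> v0 h; case: N => [|N].
  rewrite /texp big_ord1 expr0 mulr1 /= fact0 invr1 rq1 mulr1 mul1n -polyC1 derivC.
  apply: eqm_sym; apply/eqmE; rewrite subr0; exact: vz_deriv.
rewrite texp_deriv.
have := eqmMvz (vz_deriv h) (eqm_sym (texp_trunc (N:=N) h)).
apply: eqm_le; rewrite mulnC; case: v v0 {h} => // v _; rewrite !mulSn /=; lia.
Qed.

Lemma EP N v p q : (0 < v)%N -> vz v p -> vz v q ->
  eqm (N.+1 * v)%N (texp N p * texp N q) (texp N (p + q)).
Proof.
move=> v0 hp hq.
have v1 : forall r, vz v r -> vz 1 r by move=> r; apply: vz_le.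
apply: (ode_uniq (g := (p + q)^`())).
- have hp1 := v1 _ hp; have hq1 := v1 _ hq; have hpq1 := v1 _ (vzD hp hq).
  by rewrite coef0M !texp_coef0 ?mulr1.
- rewrite derivM.
  have e1 := texp_ode (N:=N) v0 hp; have e2 := texp_ode (N:=N) v0 hq.
  apply: eqm_trans (eqmD (eqmM e1 (@eqm_refl _ _ (texp N q))) (eqmM (@eqm_refl _ _ (texp N p)) e2)) _.
  move=> m _; congr (_`_m).
  by rewrite derivD mulrDl !mulrA [texp N p * _]mulrC.
- by apply: texp_ode => //; apply: vzD.
Qed.

Lemma EP_big N v n (Y : nat -> {poly A}) : (0 < v)%N -> (forall k, vz v (Y k)) ->
  eqm (N.+1 * v)%N (\prod_(k < n) texp N (Y k)) (texp N (\sum_(k < n) Y k)).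
Proof.
move=> v0 hY; elim: n => [|n IH].
  by rewrite big_ord0 big_ord0 texp0.
rewrite !big_ord_recr /=.
apply: eqm_trans (eqmM IH (@eqm_refl _ _ _)) _.
apply: EP => //; exact: vz_sum.
Qed.

Definition Qlog (N : nat) L : {poly A} :=
  \sum_(s < N) rq ((-1) ^+ s / (s.+1)%:R) * L ^+ s.+1.

Lemma Qlog_deriv N L : (Qlog N L)^`() = L^`() * \sum_(s < N) (- L) ^+ s.
Proof.
rewrite /Qlog raddf_sum big_distrr /=; apply: eq_bigr => s _.
rewrite deriv_mulC deriv_exp /=.
have -> : forall c, ((c *: (1:A))%:P) = rq c by [].
rewrite rq_mulrn divfK ?pnatr_eq0 // [(- L) ^+ s]exprNn.
by rewrite rqX rqN rq1 mulrCA.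
Qed.

Lemma Qlog_vz N L : vz 1 L -> vz 1 (Qlog N L).
Proof.
move=> h; apply: vz_sum => s; apply: vzMl.
by apply: vz_le (vzX (j := s.+1) h); rewrite mul1n.
Qed.

Lemma log_exp N L : vz 1 L -> eqm N.+1 (texp N (Qlog N L)) (1 + L).
Proof.
move=> h; have hQ := Qlog_vz N h.
have c0 : (texp N (Qlog N L))`_0 = (1 + L)`_0.
  by rewrite (texp_coef0 N hQ) coefD coefC h ?addr0.
have ey := texp_ode (N:=N) (ltn0Sn 0) hQ; rewrite muln1 /= in ey.
apply: (ode_uniq (D:=N.+1) (g := (Qlog N L)^`()) c0 ey).
rewrite /= derivD derivC add0r Qlog_deriv.
have e : (\sum_(s < N) (- L) ^+ s) * (1 + L) = 1 - (- L) ^+ N.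
  have E := subrX1 (- L) N.
  have -> : 1 + L = - (- L - 1) by rewrite opprB opprK addrC.
  by rewrite mulrN mulrC -E opprB.
rewrite -mulrA e mulrBr mulr1.
apply: eqm_sym; apply: eqm_vz => //; apply: vzN; apply: vzMl.
by apply: vz_le (vzX (j := N) (vzN h)); rewrite mul1n.
Qed.

End Exp.


Section GG.
Variable A : comAlgType rat.
Local Notation rq := (@rq A).
Local Notation texp := (@texp A).
Local Notation Qlog := (@Qlog A).

Definition Lp (n : nat) (X : nat -> A) : {poly A} :=
  \sum_(k < n) (X k.+1)%:P * 'X^(k.+1).

Lemma coef_Lp n X m : (Lp n X)`_m = if (0 < m <= n)%N then X m else 0.
Proof.
rewrite /Lp coef_sum.
case: ifP => hm.
  have hm' : (m.-1 < n)%N by lia.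
  rewrite (bigD1 (Ordinal hm')) //= big1.
    by rewrite coefCM coefXn prednK ?eqxx ?mulr1 ?addr0 //; lia.
  move=> k hk; rewrite coefCM coefXn; case: eqP => [E|]; last by rewrite mulr0.
  by exfalso; move/negP: hk; apply; apply/eqP; apply: val_inj => /=; lia.
rewrite big1 // => k _; rewrite coefCM coefXn; case: eqP => [E|]; last by rewrite mulr0.
by move: hm (ltn_ord k); rewrite E; lia.
Qed.

Lemma Lp_vz n X : vz 1 (Lp n X).
Proof. by move=> m hm; rewrite coef_Lp; case: m hm. Qed.

Lemma Lp_hz n X : hz n (Lp n X).
Proof. by move=> m hm; rewrite coef_Lp; case: ifP => //; lia. Qed.


Lemma rq_prod n (F : 'I_n -> rat) : \prod_(k < n) rq (F k) = rq (\prod_(k < n) F k).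
Proof. by rewrite (big_morph rq (@rqM A) (@rq1 A)). Qed.

Lemma asum_le_weight n (a : {ffun 'I_n -> 'I_n.+1}) : (asum a <= weight a)%N.
Proof. by apply: leq_sum => k _; apply: leq_pmull. Qed.

Lemma weight_bound n (a : {ffun 'I_n -> 'I_n.+1}) : (weight a <= n * n * n)%N.
Proof.
rewrite /weight; apply: leq_trans (_ : (\sum_(k < n) (n * n) <= _)%N).
  apply: leq_sum => k _; apply: leq_mul; first exact: ltn_ord.
  by rewrite -ltnS; exact: ltn_ord.
by rewrite sum_nat_const card_ord mulnA.
Qed.

Lemma term_eq n (X : nat -> A) (M : nat) (a : {ffun 'I_n -> 'I_n.+1}) :
  \prod_(k < n) (rq (((a k : nat)`!)%:R^-1) * ((X k.+1)%:P * 'X^(k.+1 + M)) ^+ a k)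
  = rq ((afact a)%:R^-1) * ((monom X a)%:P * 'X^(M * asum a + weight a)).
Proof.
rewrite big_split /= rq_prod prodfV -natr_prod; congr (_ * _).
under eq_bigr => k _ do rewrite exprMn -rmorphXn /= -exprM.
rewrite big_split /= -rmorph_prod prodrXr; congr (_ * 'X^_).
rewrite /asum /weight big_distrr -big_split; apply: eq_bigr => k _ /=.
by rewrite mulnDl mulnC addnC.
Qed.


Lemma decode (M x y x' y' : nat) : (y < M)%N -> (y' < M)%N ->
  (M * x + y == M * x' + y')%N = (x == x') && (y == y').
Proof.
move=> hy hy'; rewrite ![(M * _)%N]mulnC.
apply/eqP/andP => [E|[/eqP-> /eqP->]] //; split; apply/eqP.
  have := congr1 (divn^~ M) E; rewrite /= !divnMDl ?divn_small ?addn0 //; lia.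
have := congr1 (modn^~ M) E; rewrite /= !modnMDl !modn_small //.
Qed.

Lemma leq_addl_aux k M : (M.+1 <= k.+1 + M)%N.
Proof. by rewrite addSn ltnS leq_addl. Qed.

Lemma Gs n (X : nat -> A) (s : nat) : (s <= n)%N ->
  \sum_(a : {ffun 'I_n -> 'I_n.+1} | (weight a == n) && (asum a == s))
      ((afact a)%:R^-1 *: monom X a)
  = (((s`!)%:R^-1 : rat) *: (Lp n X ^+ s)`_n).
Proof.
move=> hs.
have hn2 : (n <= n * n)%N by case: n {hs} => // n; apply: leq_pmulr.
have hn3 : (n * n <= n * n * n)%N by case: n {hs hn2} => // n; apply: leq_pmulr.
set M := (n * n * n).+1.
have hnM : (n < M)%N by rewrite /M ltnS; apply: leq_trans hn3.
have hn2M : (n * n < M)%N by rewrite /M ltnS.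
pose Y k := (X k.+1)%:P * 'X^(k.+1 + M).
have hT : \prod_(k < n) texp n (Y k) = \sum_(a : {ffun 'I_n -> 'I_n.+1})
     rq ((afact a)%:R^-1) * ((monom X a)%:P * 'X^(M * asum a + weight a)).
  rewrite /texp bigA_distr_bigA /=.
  by apply: eq_bigr => a _; rewrite -term_eq.
have hE := @EP_big A n M.+1 n Y (ltn0Sn _)
   (fun k => @vz_CX _ (X k.+1) (k.+1 + M) M.+1 (leq_addl_aux k M)).
have hS : \sum_(k < n) Y k = Lp n X * 'X^M.
  by rewrite /Lp big_distrl; apply: eq_bigr => k _; rewrite /Y exprD mulrA.
have hidx : (M * s + n < n.+1 * M.+1)%N.
  have : (M * s <= M * n)%N by rewrite leq_mul2l hs orbT.
  rewrite mulSn mulnS; lia.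
have := hE _ hidx; rewrite hT hS => e.
transitivity ((\sum_(a : {ffun 'I_n -> 'I_n.+1})
     rq ((afact a)%:R^-1) * ((monom X a)%:P * 'X^(M * asum a + weight a)))`_(M * s + n)).
  rewrite coef_sum big_mkcond /=; apply: eq_bigr => a _.
  rewrite coef_rq coefCM coefXn.
  have hw := weight_bound a.
  rewrite eq_sym decode // [(s == asum a)]eq_sym [(_ && (n == _))]andbC.

  by case: ifP => _; rewrite ?mulr1 ?mulr0 ?scaler0.
rewrite e /texp coef_sum (bigD1 (Ordinal (n:=n.+1) (m:=s) hs)) //= big1.
  rewrite addr0 coef_rq exprMn -exprM coefMXn ltnNge leq_addr /=.
  by rewrite addKn.
move=> j hj; rewrite coef_rq exprMn -exprM coefMXn.
case: ifP => hlt; first by rewrite scaler0.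
have hjs : (j < s)%N.
  have hne : (j : nat) != s by move: hj; apply: contra => E; apply/eqP; apply: val_inj; apply/eqP.
  rewrite ltn_neqAle hne /=; rewrite leqNgt; apply/negP => hsj.
  move/negbT: hlt; rewrite -leqNgt => hle.
  have : (M * s.+1 <= M * j)%N by rewrite leq_mul2l hsj orbT.
  rewrite mulnS; lia.
have : (M * j.+1 <= M * s)%N by rewrite leq_mul2l hjs orbT.
have : (n * j <= n * n)%N by rewrite leq_mul2l -ltnS ltn_ord orbT.
rewrite mulnS => h1 h2.
rewrite (hzX (j:=j) (Lp_hz (n:=n) X)) ?scaler0 //.
lia.
Qed.


Lemma GG n (X : nat -> A) (w : nat -> rat) :
  \sum_(a : {ffun 'I_n -> 'I_n.+1} | weight a == n)
      ((w (asum a) / (afact a)%:R) *: monom X a)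
  = \sum_(s < n.+1) (w s / (s`!)%:R) *: (Lp n X ^+ s)`_n.
Proof.
rewrite (partition_big (fun a => inord (asum a) : 'I_n.+1) predT); last by [].
apply: eq_bigr => s _.
rewrite (eq_bigl (fun a => (weight a == n) && (asum a == s))); last first.
  move=> a /=; case: eqP => //= hw.
  have ha : (asum a <= n)%N by rewrite -{2}hw asum_le_weight.
  by rewrite -val_eqE /= inordK.
rewrite (eq_bigr (fun a => w s *: ((afact a)%:R^-1 *: monom X a))); last first.
  by move=> a /andP[_ /eqP ->]; rewrite scalerA.
rewrite -scaler_sumr Gs ?scalerA //.
by rewrite -ltnS; exact: ltn_ord.
Qed.

Lemma Psi_texp n (X : nat -> A) : Psi n X = (texp n (Lp n X))`_n.
Proof.
have E := GG n X (fun _ => 1); rewrite /= in E.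
rewrite /Psi; under eq_bigr => a _ do rewrite -[X in X *: _]mul1r.
rewrite E /texp coef_sum; apply: eq_bigr => s _.
by rewrite coef_rq mul1r.
Qed.

Lemma Pformula_Lp i (l : nat -> A) : Pformula l i =
  \sum_(s < i.+1) (((-1) ^+ s.+1 * (s.-1)`!%:R / (s`!)%:R) : rat) *: (Lp i l ^+ s)`_i.
Proof.
have E := GG i l (fun s => ((-1) ^+ s.+1 * (s.-1)`!%:R : rat)); rewrite /= in E.
by rewrite /Pformula E.
Qed.








End GG.


Lemma sum_trunc (V : zmodType) k N (g : nat -> V) : (k <= N)%N ->
  (forall s, (k <= s)%N -> g s = 0) -> \sum_(s < N) g s = \sum_(s < k) g s.
Proof.
move=> hkN hg; rewrite (big_ord_widen N g hkN) [in RHS]big_mkcond; apply: eq_bigr => s _.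
by case: ifP => // /negbT; rewrite -leqNgt => h; rewrite hg.
Qed.

Lemma rat_coef (s : nat) :
  ((-1) ^+ (s.+1).+1 * ((s.+1).-1)`!%:R / ((s.+1)`!)%:R : rat) = (-1) ^+ s / (s.+1)%:R.
Proof.
rewrite !exprS !mulN1r opprK /= factS natrM invfM.
by rewrite -mulrA [s`!%:R * _]mulrCA mulfV ?mulr1 // pnatr_eq0 -lt0n fact_gt0.
Qed.

Section Main.
Variable A : comAlgType rat.
Variable l : nat -> A.
Local Notation rq := (@rq A).
Local Notation texp := (@texp A).
Local Notation Qlog := (@Qlog A).
Local Notation Pf := (Pformula l).

Lemma eqm_Lp k N (X : nat -> A) : (k <= N)%N -> eqm k.+1 (Lp k X) (Lp N X).
Proof.
move=> hk m hm; rewrite !coef_Lp; case: ifP; case: ifP => //; lia.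
Qed.

Lemma coef_Pf k N : (0 < k)%N -> (k <= N)%N -> (Qlog N (Lp N l))`_k = Pf k.
Proof.
move=> k0 hkN.
rewrite Pformula_Lp big_ord_recl /= expr0 coefC.
have -> : (k == 0%N) = false by case: k k0 {hkN}.
rewrite scaler0 add0r /Qlog coef_sum.
rewrite (sum_trunc (k:=k) (g := fun s : nat => (rq ((-1) ^+ s / (s.+1)%:R) * Lp N l ^+ s.+1)`_k)) //; last first.
  move=> s hs; rewrite coef_rq (vzX (j := s.+1) (Lp_vz N l)) ?scaler0 //.
  by rewrite mul1n ltnS.
apply: eq_bigr => s _; rewrite coef_rq /bump /= add1n rat_coef.
congr (_ *: _); symmetry; apply: (eqmX _ (eqm_Lp l hkN)); exact: ltnSn.

Qed.

Lemma key_rel N' : l N'.+1 = Pf N'.+1 + (texp N'.+1 (Lp N' Pf))`_N'.+1.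
Proof.
set N := N'.+1.
have h1 := log_exp (N:=N) (Lp_vz N l).
have h2 : eqm N.+1 (Qlog N (Lp N l)) (Lp N Pf).
  move=> m hm; rewrite coef_Lp; case: ifP => [/andP[m0 mN]|].
    exact: coef_Pf.
  case: m hm => [|m] hm; last by lia.
  by move=> _; rewrite (Qlog_vz N (Lp_vz N l)).
have h3 := texp_eqm N h2.
have -> : l N = (1 + Lp N l)`_N by rewrite coefD coef1 coef_Lp /N /= leqnn add0r.
rewrite -h1 // h3 //.
have -> : Lp N Pf = Lp N' Pf + (Pf N)%:P * 'X^N by rewrite /Lp big_ord_recr.
have vb : vz 1 ((Pf N)%:P * 'X^N) by apply: vz_CX.
have := EP (N:=N) (ltn0Sn 0) (Lp_vz N' Pf) vb; rewrite muln1 => e.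
rewrite -e // {e}.
have -> : texp N ((Pf N)%:P * 'X^N) = 1 + (Pf N)%:P * 'X^N +
   \sum_(j < N') rq ((j.+2)`!%:R^-1) * ((Pf N)%:P * 'X^N) ^+ j.+2.
  rewrite /texp /N big_ord_recl big_ord_recl /= expr0 expr1 mulr1 !invr1 !rq1 mul1r.
  by rewrite addrA.
rewrite !mulrDr !coefD.
have hr : vz N.+1 (\sum_(j < N') rq ((j.+2)`!%:R^-1) * ((Pf N)%:P * 'X^N) ^+ j.+2).
  apply: vz_sum => j; apply: vzMl; apply: vz_le (vzX (j := j.+2) (vz_CX (Pf N) (leqnn N))).
  by rewrite /N mulnC !mulSn; lia.
rewrite (vzMl (texp N (Lp N' Pf)) hr) //.
rewrite mulr1 addr0 mulrA coefMXn ltnn subnn coefMC.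
rewrite texp_coef0; last exact: Lp_vz. by rewrite mul1r addrC.
Qed.


Lemma Pfun_eq m k : Pfun l m k = if (0 < k <= m)%N then Pf k else 0.
Proof.
elim: m k => [|m IH] k /=.
  by case: ifP => // /andP[h1 h2]; lia.
case: eqP => [->|hk].
  rewrite ltn0Sn leqnn /=.
  case: eqP => [m0|m0].
    subst m; have := key_rel 0; rewrite /Lp big_ord0 texp0 coef1 /= addr0.
    by move=> ->.
  rewrite Psi_texp.
  have -> : Lp m.+1 (Pfun l m) = Lp m Pf.
    rewrite /Lp big_ord_recr /= IH ltnn andbF polyC0 mul0r addr0.
    by apply: eq_bigr => j _; rewrite IH ltn0Sn ltn_ord.
  by rewrite (key_rel m) addrK.
rewrite IH; congr (if _ then _ else _).
by apply/idP/idP => /andP[h1 h2]; apply/andP; split => //; lia.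
Qed.

Theorem main_thm (i : nat) : (1 <= i)%N -> P l i = Pformula l i.
Proof. by move=> hi; rewrite /P Pfun_eq hi leqnn. Qed.

End Main.

Theorem proposition9p3 (A : comAlgType rat) (l : nat -> A) (i : nat) :
  (1 <= i)%N -> P l i = Pformula l i.
Proof. exact: main_thm. Qed.
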